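(* Let $G$ be a hereditarily normal topological group and let $S,T\subseteq G$ be compact subspaces. Suppose $S$ is separable, $s\in S$ is a limit (non-isolated) point of $S$, and $t\in T$ has uncountable character in $T$. Then there exists a compact set $C\subseteq T$ with $t\in C$ such that $t$ has uncountable character in $C$ and $sC\subseteq St$, where $sC=\{sc: c\in C\}$ and $St=\{xt : x\in S\}$.
   Context: All spaces are assumed to be $T_1$. The group operation is written multiplicatively. The character of a point $t$ in a space $Y$ is the minimal cardinality of a local base at $t$ in $Y$. *)

(* Defs.v *)
From Stdlib Require Import List Classical.

Set Implicit Arguments.

Record TopGroup := {
  carrier :> Type;
  mul : carrier -> carrier -> carrier;
  inv : carrier -> carrier;
  one : carrier;
  mulA : forall x y z, mul x (mul y z) = mul (mul x y) z;
  mul1g : forall x, mul one x = x;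
  mulg1 : forall x, mul x one = x;
  mulVg : forall x, mul (inv x) x = one;
  mulgV : forall x, mul x (inv x) = one;
  is_open : (carrier -> Prop) -> Prop;
  open_full : is_open (fun _ => True);
  open_inter : forall U V, is_open U -> is_open V ->
      is_open (fun x => U x /\ V x);
  open_union : forall F : (carrier -> Prop) -> Prop,
      (forall U, F U -> is_open U) -> is_open (fun x => exists U, F U /\ U x);
  mul_cont : forall W x y, is_open W -> W (mul x y) ->
      exists U V, is_open U /\ is_open V /\ U x /\ V y /\
        (forall a b, U a -> V b -> W (mul a b));
  inv_cont : forall W, is_open W -> is_open (fun x => W (inv x))
}.

Section Topo.
Context {G : TopGroup}.

Definition is_closed (F : G -> Prop) : Prop := is_open G (fun x => ~ F x).

(* T1: all spaces are T1 (standing assumption). *)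
Definition T1 : Prop :=
  forall x y : G, x <> y -> exists U, is_open G U /\ U x /\ ~ U y.

(* Y (a subspace) is normal: disjoint relatively closed subsets of Y
   have disjoint relatively open neighbourhoods in Y. *)
Definition normal_subspace (Y : G -> Prop) : Prop :=
  forall FA FB : G -> Prop, is_closed FA -> is_closed FB ->
    (forall x, Y x -> FA x -> FB x -> False) ->
    exists U V, is_open G U /\ is_open G V /\
      (forall x, Y x -> FA x -> U x) /\ (forall x, Y x -> FB x -> V x) /\
      (forall x, Y x -> U x -> V x -> False).

Definition hereditarily_normal : Prop :=
  forall Y : G -> Prop, normal_subspace Y.

Definition compact (S : G -> Prop) : Prop :=
  forall F : (G -> Prop) -> Prop, (forall U, F U -> is_open G U) ->
    (forall x, S x -> exists U, F U /\ U x) ->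
    exists l : list (G -> Prop), (forall U, In U l -> F U) /\
      (forall x, S x -> exists U, In U l /\ U x).

(* S is separable: it has a countable dense subset (enumerated with
   possible gaps, so that the empty/finite case is included). *)
Definition separable (S : G -> Prop) : Prop :=
  exists d : nat -> option G,
    (forall n x, d n = Some x -> S x) /\
    (forall U, is_open G U -> (exists x, S x /\ U x) ->
       exists n x, d n = Some x /\ U x).

Definition limit_point (S : G -> Prop) (s : G) : Prop :=
  S s /\ forall U, is_open G U -> U s -> exists x, S x /\ U x /\ x <> s.

(* t has countable character in the subspace T: there is a countable local
   base at t in T.  Relatively open sets V n /\ T are represented by open
   sets V n of G. *)
Definition countable_character (T : G -> Prop) (t : G) : Prop :=
  exists V : nat -> (G -> Prop),
    (forall n, is_open G (V n) /\ V n t) /\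
    (forall U, is_open G U -> U t ->
       exists n, forall x, T x -> V n x -> U x).

Definition uncountable_character (T : G -> Prop) (t : G) : Prop :=
  T t /\ ~ countable_character T t.

End Topo.

(* Main.v *)
Require Import Defs.
From Stdlib Require Import List Classical.
From Stdlib Require Import FunctionalExtensionality PropExtensionality IndefiniteDescription Lia.

Section Aux.
Context {G : TopGroup}.

Lemma open_ext (P Q : G -> Prop) : (forall x, P x <-> Q x) -> is_open G P -> is_open G Q.
Proof.
  intros H HP.
  assert (E : P = Q).
  { apply functional_extensionality; intro x; apply propositional_extensionality; apply H. }
  rewrite <- E; exact HP.
Qed.

Lemma open_local (P : G -> Prop) :
  (forall x, P x -> exists U, is_open G U /\ U x /\ forall y, U y -> P y) -> is_open G P.
Proof.
  intros H.
  apply (open_ext (fun x => exists U, (fun U => is_open G U /\ forall y, U y -> P y) U /\ U x)).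
  - intro x; split.
    + intros [U [[_ HUP] Ux]]. auto.
    + intro Px. destruct (H x Px) as [U [HU [Ux HUP]]]. exists U. auto.
  - apply open_union. intros U [HU _]; exact HU.
Qed.

Lemma inv_one : inv G (one G) = one G.
Proof. rewrite <- (mulg1 G (inv G (one G))). apply mulVg. Qed.

Lemma mul_cancel_l (a b c : G) : mul G a b = mul G a c -> b = c.
Proof.
  intros H. rewrite <- (mul1g G b), <- (mul1g G c), <- (mulVg G a), <- !mulA, H.
  reflexivity.
Qed.

Lemma mul_cancel_r (a b c : G) : mul G b a = mul G c a -> b = c.
Proof.
  intros H. rewrite <- (mulg1 G b), <- (mulg1 G c), <- (mulgV G a), !mulA, H.
  reflexivity.
Qed.

Definition cont (f : G -> G) := forall W x, is_open G W -> W (f x) ->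
  exists U, is_open G U /\ U x /\ forall y, U y -> W (f y).

Lemma cont_lmul a : cont (fun y => mul G a y).
Proof.
  intros W x HW Hx. destruct (mul_cont G W a x HW Hx) as [U [V [_ [HV [Ua [Vx H]]]]]].
  exists V. split; [exact HV|split; [exact Vx|]]. intros y Vy. apply H; auto.
Qed.

Lemma cont_rmul a : cont (fun y => mul G y a).
Proof.
  intros W x HW Hx. destruct (mul_cont G W x a HW Hx) as [U [V [HU [_ [Ux [Va H]]]]]].
  exists U. split; [exact HU|split; [exact Ux|]]. intros y Uy. apply H; auto.
Qed.

Lemma cont_preimage f W : cont f -> is_open G W -> is_open G (fun y => W (f y)).
Proof.
  intros Hf HW. apply open_local. intros x Hx. destruct (Hf W x HW Hx) as [U [HU [Ux H]]].
  exists U; auto.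
Qed.

Lemma open_minus (HT1 : @T1 G) (U : G -> Prop) p :
  is_open G U -> is_open G (fun x => U x /\ x <> p).
Proof.
  intros HU. apply open_local. intros x [Ux Hxp].
  destruct (HT1 x p Hxp) as [W [HW [Wx Wp]]].
  exists (fun y => U y /\ W y). split; [apply open_inter; auto|split; [auto|]].
  intros y [Uy Wy]. split; auto. intro E; subst; auto.
Qed.

Lemma regular (x : G) O : is_open G O -> O x ->
  exists R Q, is_open G R /\ is_open G Q /\ R x /\ (forall y, ~ O y -> Q y) /\
    (forall y, R y -> Q y -> False).
Proof.
  intros HO Ox. rewrite <- (mulg1 G x) in Ox.
  destruct (mul_cont G O x (one G) HO Ox) as [U1 [V1 [HU1 [HV1 [U1x [V11 H]]]]]].
  exists U1, (fun y => exists z, ~ O z /\ V1 (mul G (inv G y) z)).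
  split; [exact HU1|split; [|split; [exact U1x|split]]].
  - apply open_local. intros y [z [Oz Vz]].
    exists (fun y => V1 (mul G (inv G y) z)). split.
    + apply (inv_cont G (fun w => V1 (mul G w z))). apply cont_preimage; auto.
      apply cont_rmul.
    + split; auto. intros y' Hy'. exists z; auto.
  - intros y Oy. exists y. split; auto. rewrite mulVg. exact V11.
  - intros y Uy [z [Oz Vz]]. apply Oz. specialize (H _ _ Uy Vz).
    rewrite mulA, mulgV, mul1g in H. exact H.
Qed.

Lemma hausdorff (HT1 : @T1 G) (x y : G) : x <> y ->
  exists R Q, is_open G R /\ is_open G Q /\ R x /\ Q y /\ (forall z, R z -> Q z -> False).
Proof.
  intros Hxy.
  destruct (regular x (fun z => True /\ z <> y)) as [R [Q [HR [HQ [Rx [HQc Hd]]]]]].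
  - apply open_minus; auto. apply open_full.
  - auto.
  - exists R, Q. repeat split; auto. apply HQc. intros [_ H]; auto.
Qed.

Lemma fin_inter (x : G) (F : (G -> Prop) -> Prop) (l : list (G -> Prop)) :
  (forall Q, In Q l -> F Q) ->
  (forall Q, F Q -> exists R, is_open G R /\ R x /\ forall y, R y -> Q y -> False) ->
  exists R, is_open G R /\ R x /\ forall Q, In Q l -> forall y, R y -> Q y -> False.
Proof.
  intros Hl HF. induction l as [|a l IH].
  - exists (fun _ => True). split; [apply open_full|split; [auto|intros Q []]].
  - destruct IH as [R1 [HR1 [R1x H1]]]. { intros Q HQ; apply Hl; right; auto. }
    destruct (HF a (Hl a (or_introl eq_refl))) as [R2 [HR2 [R2x H2]]].
    exists (fun y => R1 y /\ R2 y). split; [apply open_inter; auto|split; auto].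
    intros Q [E|HQ] y [Ry1 Ry2]; [subst; eauto|eauto].
Qed.

Lemma compact_closed (HT1 : @T1 G) (K : G -> Prop) : compact K -> is_closed K.
Proof.
  intros HK. unfold is_closed. apply open_local. intros x Kx.
  destruct (HK (fun Q => is_open G Q /\ exists R, is_open G R /\ R x /\
     forall y, R y -> Q y -> False)) as [l [Hl Hcov]].
  - intros U [HU _]; exact HU.
  - intros k Kk. assert (Hxk : x <> k) by (intro E; subst; auto).
    destruct (hausdorff HT1 x k Hxk) as [R [Q [HR [HQ [Rx [Qk Hd]]]]]].
    exists Q. split; auto. split; auto. exists R; auto.
  - destruct (fin_inter x _ l Hl) as [R [HR [Rx HRd]]].
    + intros Q [_ H]; exact H.
    + exists R. split; auto. split; auto. intros y Ry Ky.
      destruct (Hcov y Ky) as [U [HUl Uy]]. eapply HRd; eauto.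
Qed.

Lemma filter_list (P : (G -> Prop) -> Prop) (l : list (G -> Prop)) :
  exists l', forall U, In U l' <-> In U l /\ P U.
Proof.
  induction l as [|a l [l' IH]].
  - exists nil. intro U; simpl; tauto.
  - destruct (classic (P a)) as [Pa|nPa].
    + exists (a :: l'). intro U; simpl. rewrite IH. split.
      * intros [E|H]; [subst; auto|tauto].
      * intros [[E|H] PU]; [left; auto|right; auto].
    + exists l'. intro U; simpl. rewrite IH. split.
      * tauto.
      * intros [[E|H] PU]; [subst; contradiction|auto].
Qed.

Lemma compact_inter (K F : G -> Prop) : compact K -> is_closed F ->
  compact (fun x => K x /\ F x).
Proof.
  intros HK HF Fm Hop Hcov.
  destruct (HK (fun U => Fm U \/ U = (fun x => ~ F x))) as [l [Hl Hc]].
  - intros U [H|E]; [auto|subst; exact HF].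
  - intros x Kx. destruct (classic (F x)) as [Fx|nFx].
    + destruct (Hcov x (conj Kx Fx)) as [U [H1 H2]]. exists U; auto.
    + exists (fun x => ~ F x). auto.
  - destruct (filter_list Fm l) as [l' Hl'].
    exists l'. split.
    + intros U HU. apply Hl' in HU. tauto.
    + intros x [Kx Fx]. destruct (Hc x Kx) as [U [HUl Ux]].
      exists U. split; auto. apply Hl'. split; auto.
      destruct (Hl U HUl) as [H|E]; auto. subst. contradiction.
Qed.

Lemma list_choose (A B : Type) (P : B -> Prop) (R : A -> B -> Prop) (l : list A) :
  (forall a, In a l -> exists b, P b /\ R a b) ->
  exists l' : list B, (forall b, In b l' -> P b) /\
    forall a, In a l -> exists b, In b l' /\ R a b.
Proof.
  induction l as [|a l IH]; intros H.
  - exists nil. split; [intros b []|intros a []].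
  - destruct IH as [l' [H1 H2]]. { intros a' Ha'; apply H; right; auto. }
    destruct (H a (or_introl eq_refl)) as [b [Pb Rab]].
    exists (b :: l'). split.
    + intros b' [E|Hb']; [subst; auto|auto].
    + intros a' [E|Ha']; [subst; exists b; simpl; auto|].
      destruct (H2 a' Ha') as [b' [Hb' R']]. exists b'; simpl; auto.
Qed.

Lemma compact_image (f : G -> G) (K : G -> Prop) : cont f -> compact K ->
  compact (fun y => exists x, K x /\ y = f x).
Proof.
  intros Hf HK Fm Hop Hcov.
  destruct (HK (fun U => is_open G U /\ exists W, Fm W /\ forall y, U y -> W (f y)))
    as [l [Hl Hc]].
  - intros U [HU _]; exact HU.
  - intros x Kx. destruct (Hcov (f x) (ex_intro _ x (conj Kx eq_refl))) as [W [FW Wfx]].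
    destruct (Hf W x (Hop W FW) Wfx) as [U [HU [Ux HUW]]].
    exists U. split; auto. split; auto. exists W; auto.
  - destruct (list_choose _ _ Fm (fun U W => forall y, U y -> W (f y)) l) as [l' [H1 H2]].
    + intros U HU. destruct (Hl U HU) as [_ H]; exact H.
    + exists l'. split; auto. intros y [x [Kx E]]. subst.
      destruct (Hc x Kx) as [U [HUl Ux]]. destruct (H2 U HUl) as [W [HW HUW]].
      exists W; auto.
Qed.

Lemma pseudo_to_char (T : G -> Prop) (t : G) (P : nat -> G -> Prop) :
  compact T -> (forall n, is_open G (P n) /\ P n t) ->
  (forall z, T z -> (forall n, P n z) -> z = t) -> countable_character T t.
Proof.
  intros HT HP Hps.
  assert (Hex : forall n, exists RQ : (G -> Prop) * (G -> Prop),
    is_open G (fst RQ) /\ is_open G (snd RQ) /\ fst RQ t /\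
    (forall y, ~ P n y -> snd RQ y) /\ (forall y, fst RQ y -> snd RQ y -> False)).
  { intro n. destruct (HP n) as [HPn Pnt].
    destruct (regular t (P n) HPn Pnt) as [R [Q H]]. exists (R, Q); exact H. }
  destruct (functional_choice _ Hex) as [f Hf].
  set (R := fun n => fst (f n)). set (Q := fun n => snd (f n)).
  set (Qm := fun m y => exists k, k <= m /\ Q k y).
  set (Bm := fun m y => forall k, k <= m -> R k y).
  exists Bm. split.
  - intro m. split.
    + induction m as [|m IH].
      * apply (open_ext (R 0)). 2: apply (Hf 0).
        intro y; unfold Bm; split; [intros H k Hk; assert (k = 0) by lia; subst; auto|].
        intro H; apply H; lia.
      * apply (open_ext (fun y => Bm m y /\ R (S m) y)). 2: apply open_inter; auto; apply (Hf (S m)).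
        intro y; unfold Bm; split.
        -- intros [H1 H2] k Hk. destruct (PeanoNat.Nat.eq_dec k (S m)); [subst; auto|apply H1; lia].
        -- intros H; split; [intros k Hk; apply H; lia|apply H; lia].
    + intros k _. apply (Hf k).
  - intros U HU Ut.
    destruct (HT (fun W => W = U \/ exists m, W = Qm m)) as [l [Hl Hc]].
    + intros W [E|[m E]]; subst; auto. apply open_local. intros y [k [Hk Qky]].
      exists (Q k). split; [apply (Hf k)|split; auto]. intros y' Hy'. exists k; auto.
    + intros z Tz. destruct (classic (U z)) as [Uz|nUz].
      * exists U; auto.
      * assert (Hn : ~ forall n, P n z). { intro H. apply nUz. rewrite (Hps z Tz H). auto. }
        apply not_all_ex_not in Hn. destruct Hn as [n Hn].
        exists (Qm n). split; [right; exists n; auto|]. exists n. split; auto.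
        apply (Hf n); auto.
    + assert (Hm : exists m, forall W, In W l -> forall y, W y -> U y \/ Qm m y).
      { clear Hc. induction l as [|a l IH].
        - exists 0. intros W [].
        - destruct IH as [m IH]. { intros W HW; apply Hl; right; auto. }
          destruct (Hl a (or_introl eq_refl)) as [E|[m' E]].
          + exists m. intros W [E'|HW] y Wy; [subst; auto|eauto].
          + exists (max m m'). intros W [E'|HW] y Wy.
            * subst. right. destruct Wy as [k [Hk Qk]]. exists k; split; auto; lia.
            * destruct (IH W HW y Wy) as [H|[k [Hk Qk]]]; auto.
              right. exists k; split; auto; lia. }
      destruct Hm as [m Hm]. exists m. intros x Tx Bx.
      destruct (Hc x Tx) as [W [HW Wx]]. destruct (Hm W HW x Wx) as [H|[k [Hk Qk]]]; auto.
      exfalso. destruct (Hf k) as [_ [_ [_ [_ Hd]]]]. apply (Hd x); auto.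
  apply Bx; exact Hk.
Qed.

End Aux.

Theorem lemma2p7 (G : TopGroup) (HT1 : @T1 G) (Hhn : @hereditarily_normal G)
  (S T : G -> Prop) (s t : G)
  (HS : compact S) (HT : compact T) (Hsep : separable S)
  (Hs : limit_point S s) (Ht : uncountable_character T t) :
  exists C : G -> Prop,
    (forall x, C x -> T x) /\ compact C /\ C t /\
    uncountable_character C t /\
    (forall c, C c -> exists x, S x /\ mul G s c = mul G x t).
Proof.
  destruct Hs as [Ss Hslim]. destruct Ht as [Tt Hnc].
  pose (St := fun y => exists x, S x /\ y = mul G x t).
  assert (HSt : compact St) by exact (compact_image _ S (cont_rmul t) HS).
  assert (HStc : is_closed St) by exact (compact_closed HT1 St HSt).
  pose (C := fun c => T c /\ exists x, S x /\ mul G s c = mul G x t).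
  assert (HCt : C t) by (split; auto; exists s; auto).
  exists C. split; [intros x [Hx _]; exact Hx|]. split.
  { apply (compact_inter T (fun c => St (mul G s c)) HT).
    apply (cont_preimage (fun c => mul G s c) (fun y => ~ St y)); [apply cont_lmul|exact HStc]. }
  split; [exact HCt|]. split.
  2: { intros c [_ H]; exact H. }
  split; [exact HCt|]. intros [V [HV Hbase]]. apply Hnc.
  assert (Hex : forall n, exists RQ : (G -> Prop) * (G -> Prop),
    is_open G (fst RQ) /\ is_open G (snd RQ) /\ fst RQ t /\
    (forall y, ~ V n y -> snd RQ y) /\ (forall y, fst RQ y -> snd RQ y -> False)).
  { intro n. destruct (HV n) as [HPn Pnt].
    destruct (regular t (V n) HPn Pnt) as [R [Q H]]. exists (R, Q); exact H. }
  destruct (functional_choice _ Hex) as [f Hf].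
  pose (R := fun n => fst (f n)). pose (Q := fun n => snd (f n)).
  pose (Z := fun z => T z /\ forall n, ~ Q n z).
  assert (HZ : compact Z).
  { apply (compact_inter T (fun z => forall n, ~ Q n z) HT). unfold is_closed.
    apply (open_ext (fun x => exists n, Q n x)).
    - intro x. split; [intros [n Hn] H; exact (H n Hn)|].
      intro H. apply not_all_not_ex. exact H.
    - apply open_local. intros x [n Hn]. exists (Q n). split; [apply (Hf n)|split; auto].
      intros y Hy; exists n; auto. }
  assert (HZC : forall z, Z z -> C z -> z = t).
  { intros z [Tz HQz] Cz. apply NNPP; intro Hzt.
    destruct (HT1 t z (fun E => Hzt (eq_sym E))) as [W [HW [Wt Wz]]].
    destruct (Hbase W HW Wt) as [n Hn]. apply Wz. apply Hn; auto.
    apply NNPP; intro nV. apply (HQz n). apply (Hf n); auto. }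
  pose (p := mul G s t).
  pose (FB := fun y => exists z, Z z /\ y = mul G s z).
  assert (HFB : is_closed FB) by exact (compact_closed HT1 FB (compact_image _ Z (cont_lmul s) HZ)).
  destruct (Hhn (fun y => y <> p) St FB HStc HFB) as [U0 [V0 [HU0 [HV0 [HSU [HFV HUV]]]]]].
  { intros y Hyp [a [Sa Ea]] [z [Zz Ez]]. apply Hyp.
    assert (z = t). { apply HZC; auto. split; [apply Zz|]. exists a. split; auto. congruence. }
    subst. unfold p in *. congruence. }
  destruct Hsep as [d [Hd1 Hd2]].
  assert (Hex2 : forall k, exists O, is_open G O /\ O t /\ forall x, d k = Some x -> x <> s ->
     forall z, O z -> U0 (mul G x z) /\ mul G x z <> p).
  { intro k. destruct (d k) as [x|] eqn:E.
    - destruct (classic (x = s)) as [Exs|Nxs].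
      + exists (fun _ => True). split; [apply open_full|split; auto].
        intros x' E' N'. injection E'; intro; subst; contradiction.
      + assert (Sx : S x) by (apply (Hd1 k); auto).
        assert (Hxt : U0 (mul G x t)).
        { apply HSU; [|exists x; auto]. intro H. apply Nxs. apply (mul_cancel_r t); exact H. }
        destruct (mul_cont G U0 x t HU0 Hxt) as [A [B [HA [HB [Ax [Bt HAB]]]]]].
        exists (fun z => B z /\ z <> mul G (inv G x) p). split; [apply open_minus; auto|].
        split.
        * split; auto. intro H. apply Nxs. apply (mul_cancel_r t). fold p.
          rewrite H, mulA, mulgV, mul1g. reflexivity.
        * intros x' E' N' z [Bz Nz]. injection E'; intro; subst x'. split; [apply HAB; auto|].
          intro H. apply Nz. rewrite <- H, mulA, mulVg, mul1g. reflexivity.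
    - exists (fun _ => True). split; [apply open_full|split; auto]. intros x' E'; discriminate. }
  destruct (functional_choice _ Hex2) as [g Hg].
  apply (pseudo_to_char T t (fun n => fun y => R n y /\ g n y) HT).
  - intro n. split; [apply open_inter; [apply (Hf n)|apply (Hg n)]|].
    split; [apply (Hf n)|apply (Hg n)].
  - intros z Tz Hz. apply NNPP; intro Hzt.
    assert (Zz : Z z).
    { split; auto. intros n Qn. destruct (Hz n) as [Rn _]. destruct (Hf n) as [_ [_ [_ [_ Hd]]]]. apply (Hd z); auto. }
    assert (Vsz : V0 (mul G s z)).
    { apply HFV; [|exists z; auto]. intro H. apply Hzt. apply (mul_cancel_l s); exact H. }
    destruct (mul_cont G V0 s z HV0 Vsz) as [A [B [HA [HB [As [Bz HAB]]]]]].
    destruct (Hslim A HA As) as [x [Sx [Ax Nx]]].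
    destruct (Hd2 (fun y => A y /\ y <> s)) as [k [x' [Ek [Ax' Nx']]]].
    + apply open_minus; auto.
    + exists x; auto.
    + destruct (Hg k) as [_ [_ Hgk]].
      destruct (Hgk x' Ek Nx' z (proj2 (Hz k))) as [Ux Nxp].
      apply (HUV (mul G x' z)); auto.
Qed.
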